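(* In the GCSA-NA construction (context), for $l\in[\ell],k\in[K_c]$ let $\mathbf{C}^{l,k}_1,\dots,\mathbf{C}^{l,k}_{R'+p-1}\in\mathbb{F}^{\frac{\lambda}{m}\times\frac{\mu}{n}}$ be defined by $\mathbf{C}^{l,k}_{i+1}=\sum \mathbf{A}^{l,k}_{m',p'}\mathbf{B}^{l,k}_{p'',n''}$, the sum over all $(m',p',p'',n'')\in[m]\times[p]\times[p]\times[n]$ with $p'-1+p(m'-1)+p-p''+pm(n''-1)=i$, so that $P_s^{l,k}Q_s^{l,k}=\sum_{i=0}^{R'+p-2}\mathbf{C}^{l,k}_{i+1}(f_{l,k}-\alpha_s)^i$. Then: (a) For all $m'\in[m],n''\in[n]$, $\mathbf{C}^{l,k}_{p+p(m'-1)+pm(n''-1)}=\sum_{p'\in[p]}\mathbf{A}^{l,k}_{m',p'}\mathbf{B}^{l,k}_{p',n''}$, the $(m',n'')$ block of $\mathbf{A}^{l,k}\mathbf{B}^{l,k}$. (b) There exist matrices $I_1,\dots,I_{R'K_c+2X-1}\in\mathbb{F}^{\frac{\lambda}{m}\times\frac{\mu}{n}}$, not depending on $s$, each a function of $(\mathbf{A},\mathbf{B},\mathbf{Z}^A_{\cdot,\cdot},\mathbf{Z}^B_{\cdot,\cdot})$, with $I_x$ a function of $(\mathbf{Z}^A_{\cdot,\cdot},\mathbf{Z}^B_{\cdot,\cdot})$ alone whenever $x>R'(K_c-1)+X+D_E$, such that for every $s\in[S]$, $$Y_s=\sum_{l\in[\ell]}\sum_{k\in[K_c]}\sum_{i=0}^{R'-1}\frac{\sum_{i'=0}^{i}c_{l,k,i-i'}\mathbf{D}^{l,k}_{i'+1}}{(f_{l,k}-\alpha_s)^{R'-i}}+\sum_{x\in[R'K_c+2X-1]}\alpha_s^{x-1}J_x,$$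 where $\mathbf{D}^{l,k}_i=\mathbf{C}^{l,k}_i+\mathbf{Z}''_{l,k,i}$ for $i\in[R']$, $J_x=I_x+\mathbf{Z}'_x$ for $x\in[R'(K_c-1)+X+D_E]$, and $J_x=I_x$ for $R'(K_c-1)+X+D_E<x\le R'K_c+2X-1$.
   Context: GCSA-NA construction. Let $\mathbb{F}$ be a finite field and $S,X,\ell,K_c,p,m,n,\lambda,\kappa,\mu$ positive integers with $m\mid\lambda$, $p\mid\kappa$, $n\mid\mu$, $L=\ell K_c\le|\mathbb{F}|-S$. Inputs $\mathbf{A}^{l,k}\in\mathbb{F}^{\lambda\times\kappa}$, $\mathbf{B}^{l,k}\in\mathbb{F}^{\kappa\times\mu}$ ($l\in[\ell],k\in[K_c]$). Partition $\mathbf{A}^{l,k}$ into an $m\times p$ grid of blocks $\mathbf{A}^{l,k}_{i,j}\in\mathbb{F}^{\frac{\lambda}{m}\times\frac{\kappa}{p}}$ and $\mathbf{B}^{l,k}$ into a $p\times n$ grid of blocks $\mathbf{B}^{l,k}_{i,j}\in\mathbb{F}^{\frac{\kappa}{p}\times\frac{\mu}{n}}$. Fix $S+L$ distinct elements $f_{1,1},\dots,f_{\ell,K_c},\alpha_1,\dots,\alpha_S\in\mathbb{F}$. Let $R'=pmn$, $D_E=\max(pm,\,pmn-pm+p)-1$, $\mathcal{E}=\{p+p(m'-1)+pm(n''-1): m'\in[m],n''\in[n]\}$, and $\Delta_s^{l}=\prod_{k\in[K_c]}(f_{l,k}-\alpha_s)^{R'}$. Let $c_{l,k,i}$ be the coefficients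 of $\Psi_{l,k}(\alpha)=\prod_{k'\in[K_c]\setminus\{k\}}(\alpha+f_{l,k'}-f_{l,k})^{R'}=\sum_{i=0}^{R'(K_c-1)}c_{l,k,i}\alpha^i$, with $c_{l,k,i}=0$ for $i>R'(K_c-1)$. $P_s^{l,k}=\sum_{m'\in[m]}\sum_{p'\in[p]}\mathbf{A}^{l,k}_{m',p'}(f_{l,k}-\alpha_s)^{p'-1+p(m'-1)}$, $Q_s^{l,k}=\sum_{p''\in[p]}\sum_{n''\in[n]}\mathbf{B}^{l,k}_{p'',n''}(f_{l,k}-\alpha_s)^{p-p''+pm(n''-1)}$. Noise matrices $\mathbf{Z}^A_{l,x}\in\mathbb{F}^{\frac{\lambda}{m}\times\frac{\kappa}{p}}$, $\mathbf{Z}^B_{l,x}\in\mathbb{F}^{\frac{\kappa}{p}\times\frac{\mu}{n}}$ ($l\in[\ell],x\in[X]$); $\mathbf{Z}'_i\in\mathbb{F}^{\frac{\lambda}{m}\times\frac{\mu}{n}}$ ($i\in[R'(K_c-1)+X+D_E]$); $\mathbf{Z}''_{l,k,i}\in\mathbb{F}^{\frac{\lambda}{m}\times\frac{\mu}{n}}$ ($i\in[R']$) with $\mathbf{Z}''_{l,k,i}=\mathbf{0}$ for $i\in\mathcal{E}$ (arbitrary otherwise). $\widetilde{A}^s_l=\Delta_s^{l}\big(\sum_{k\in[K_c]}\frac{P_s^{l,k}}{(f_{l,k}-\alpha_s)^{R'}}+\sum_{x\in[X]}\alpha_s^{x-1}\mathbf{Z}^A_{l,x}\big)$, $\widetilde{B}^s_l=\sum_{k\in[K_c]}\frac{Q_s^{l,k}}{(f_{l,k}-\alpha_s)^{R'}}+\sum_{x\in[X]}\alpha_s^{x-1}\mathbf{Z}^B_{l,x}$,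 $\widetilde{M}_s=\sum_{x\in[R'(K_c-1)+X+D_E]}\alpha_s^{x-1}\mathbf{Z}'_x+\sum_{l\in[\ell]}\sum_{k\in[K_c]}\sum_{i=0}^{R'-1}\frac{\sum_{i'=0}^{i}c_{l,k,i-i'}\mathbf{Z}''_{l,k,i'+1}}{(f_{l,k}-\alpha_s)^{R'-i}}$, and $Y_s=\sum_{l\in[\ell]}\widetilde{A}^s_l\widetilde{B}^s_l+\widetilde{M}_s$. *)

(* Defs.v *)
From HB Require Import structures.
From mathcomp Require Import all_boot all_order all_algebra.
Set Implicit Arguments. Unset Strict Implicit. Unset Printing Implicit Defensive.
Import GRing.Theory.
Local Open Scope ring_scope.

(* Row-major block indexing: block i (0-indexed), offset r inside a block of size a. *)
Lemma bidx_subproof (M a : nat) (i : 'I_M) (r : 'I_a) : (i * a + r < M * a)%N.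
Proof.
apply: (@leq_trans (i.+1 * a)%N); first by rewrite mulSn addnC ltn_add2r ltn_ord.
by rewrite leq_mul2r ltn_ord orbT.
Qed.

Definition bidx (M a : nat) (i : 'I_M) (r : 'I_a) : 'I_(M * a) :=
  Ordinal (bidx_subproof i r).

Definition blk (T : Type) (M a N b : nat) (A : 'M[T]_(M * a, N * b))
  (i : 'I_M) (j : 'I_N) : 'M[T]_(a, b) :=
  \matrix_(r < a, s < b) A (bidx i r) (bidx j s).

Section GCSA.
Variables (F : fieldType) (ell Kc X p m n a b c : nat).

Definition Rp : nat := (p * m * n)%N.
Definition DE : nat := (maxn (p * m) (p * m * n - p * m + p) - 1)%N.
Definition N0 : nat := (Rp * (Kc - 1) + X + DE)%N.

(* membership in the set E = {p + p(m'-1) + pm(n''-1)}; mi = m'-1, ni = n''-1 *)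
Definition inEset (i : nat) : bool :=
  [exists mi : 'I_m, exists ni : 'I_n, i == (p + p * mi + p * m * ni)%N].

(* P_s^{l,k} and Q_s^{l,k}, with t = f_{l,k} - alpha_s; indices 0-based:
   pi = p'-1, mi = m'-1, pj = p''-1, ni = n''-1 *)
Definition Ppoly (A : 'M[F]_(m * a, p * b)) (t : F) : 'M[F]_(a, b) :=
  \sum_(mi < m) \sum_(pi < p) (t ^+ (pi + p * mi)) *: blk A mi pi.
Definition Qpoly (B : 'M[F]_(p * b, n * c)) (t : F) : 'M[F]_(b, c) :=
  \sum_(pj < p) \sum_(ni < n) (t ^+ (p - pj.+1 + p * m * ni)) *: blk B pj ni.

(* coefficient of degree e in P*Q *)
Definition Cexp (A : 'M[F]_(m * a, p * b)) (B : 'M[F]_(p * b, n * c)) (e : nat)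
  : 'M[F]_(a, c) :=
  \sum_(mi < m) \sum_(pi < p) \sum_(pj < p) \sum_(ni < n)
    (if (pi + p * mi + (p - pj.+1) + p * m * ni)%N == e
     then blk A mi pi *m blk B pj ni else 0).
(* 1-indexed: C_{i+1} = Cexp i  (only used for i >= 1) *)
Definition Cmat (A : 'M[F]_(m * a, p * b)) (B : 'M[F]_(p * b, n * c)) (i : nat)
  : 'M[F]_(a, c) := Cexp A B i.-1.

Definition Psi (f : 'I_ell -> 'I_Kc -> F) (l : 'I_ell) (k : 'I_Kc) : {poly F} :=
  \prod_(k' < Kc | k' != k) ('X + (f l k' - f l k)%:P) ^+ Rp.
Definition cc (f : 'I_ell -> 'I_Kc -> F) l k (i : nat) : F := (Psi f l k)`_i.

Variables (S : nat) (f : 'I_ell -> 'I_Kc -> F) (alpha : 'I_S -> F).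

Definition Delta (s : 'I_S) (l : 'I_ell) : F := \prod_(k < Kc) (f l k - alpha s) ^+ Rp.

Definition Atil (A : 'I_ell -> 'I_Kc -> 'M[F]_(m * a, p * b))
  (ZA : 'I_ell -> 'I_X -> 'M[F]_(a, b)) (s : 'I_S) (l : 'I_ell) : 'M[F]_(a, b) :=
  Delta s l *: (\sum_(k < Kc) ((f l k - alpha s) ^+ Rp)^-1 *: Ppoly (A l k) (f l k - alpha s)
               + \sum_(x < X) alpha s ^+ x *: ZA l x).

Definition Btil (B : 'I_ell -> 'I_Kc -> 'M[F]_(p * b, n * c))
  (ZB : 'I_ell -> 'I_X -> 'M[F]_(b, c)) (s : 'I_S) (l : 'I_ell) : 'M[F]_(b, c) :=
  \sum_(k < Kc) ((f l k - alpha s) ^+ Rp)^-1 *: Qpoly (B l k) (f l k - alpha s)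
  + \sum_(x < X) alpha s ^+ x *: ZB l x.

Definition fracSum (W : 'I_ell -> 'I_Kc -> nat -> 'M[F]_(a, c)) (s : 'I_S) : 'M[F]_(a, c) :=
  \sum_(l < ell) \sum_(k < Kc) \sum_(i < Rp)
    ((f l k - alpha s) ^+ (Rp - i))^-1 *:
      \sum_(i' < i.+1) cc f l k (i - i') *: W l k i'.+1.

(* Z' and Z'' are 1-indexed *)
Definition Mtil (Z' : nat -> 'M[F]_(a, c)) (Z'' : 'I_ell -> 'I_Kc -> nat -> 'M[F]_(a, c))
  (s : 'I_S) : 'M[F]_(a, c) :=
  \sum_(x < N0) alpha s ^+ x *: Z' x.+1 + fracSum Z'' s.

Definition Yans (A : 'I_ell -> 'I_Kc -> 'M[F]_(m * a, p * b))
  (B : 'I_ell -> 'I_Kc -> 'M[F]_(p * b, n * c))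
  (ZA : 'I_ell -> 'I_X -> 'M[F]_(a, b)) (ZB : 'I_ell -> 'I_X -> 'M[F]_(b, c))
  (Z' : nat -> 'M[F]_(a, c)) (Z'' : 'I_ell -> 'I_Kc -> nat -> 'M[F]_(a, c))
  (s : 'I_S) : 'M[F]_(a, c) :=
  \sum_(l < ell) Atil A ZA s l *m Btil B ZB s l + Mtil Z' Z'' s.

End GCSA.

(* Main.v *)
Require Import Defs.
From HB Require Import structures.
From mathcomp Require Import all_boot all_order all_algebra.
From mathcomp Require Import zify ring.
Set Implicit Arguments. Unset Strict Implicit. Unset Printing Implicit Defensive.
Import GRing.Theory.
Local Open Scope ring_scope.
Section Polys.
Variable F : fieldType.

Definition lin (u : F) : {poly F} := u%:P - 'X.

Lemma lin_horner u z : (lin u).[z] = u - z.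
Proof. by rewrite /lin hornerD hornerN hornerC hornerX. Qed.

Lemma size_lin_exp u e : size (lin u ^+ e) = e.+1.
Proof.
rewrite /lin -opprB -scaleN1r exprZn size_scale ?size_exp_XsubC //.
by rewrite expf_neq0 // oppr_eq0 oner_eq0.
Qed.

Lemma size_Xn_F e : size ('X^e : {poly F}) = e.+1.
Proof. by rewrite size_polyXn. Qed.

Lemma size_mul_le2 (q1 q2 : {poly F}) d1 d2 : (size q1 <= d1.+1)%N -> (size q2 <= d2.+1)%N ->
  (size (q1 * q2)%R <= (d1 + d2).+1)%N.
Proof. move=> h1 h2; apply: leq_trans (size_polyMleq _ _) _; lia. Qed.

Lemma size_prod_le (I : finType) (P : pred I) (G : I -> {poly F}) d :
  (forall i, P i -> (size (G i) <= d.+1)%N) -> (size (\prod_(i | P i) G i)%R <= (#|P| * d).+1)%N.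
Proof.
move=> hG; rewrite -sum_nat_const.
elim/big_rec2: _ => [|i k q Pi IH]; first by rewrite size_poly1.
apply: leq_trans (size_polyMleq _ _) _.
have := hG i Pi; lia.
Qed.

Lemma size_sum_le (I : finType) (P : pred I) (G : I -> {poly F}) N :
  (forall i, P i -> (size (G i) <= N)%N) -> (size (\sum_(i | P i) G i)%R <= N)%N.
Proof.
move=> hG; elim/big_rec: _ => [|i q Pi IH]; first by rewrite size_poly0.
apply: leq_trans (size_polyD _ _) _; rewrite geq_max IH andbT; exact: hG.
Qed.

Lemma peval_scale (V : lmodType F) N (q : {poly F}) (M : V) z :
  (size q <= N)%N -> q.[z] *: M = \sum_(x < N) z ^+ x *: (q`_x *: M).
Proof.
move=> hq; rewrite (horner_coef_wide z hq) scaler_suml; apply: eq_bigr => x _.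
by rewrite scalerA mulrC.
Qed.

Lemma coef_sum (V : lmodType F) N z (I : finType) (P : pred I) (G : I -> nat -> V) :
  \sum_(x < N) z ^+ x *: \sum_(i | P i) G i x = \sum_(i | P i) \sum_(x < N) z ^+ x *: G i x.
Proof.
under eq_bigr => x _ do rewrite scaler_sumr.
by rewrite exchange_big.
Qed.

Lemma coef_add (V : lmodType F) N z (G H : nat -> V) :
  \sum_(x < N) z ^+ x *: (G x + H x) = \sum_(x < N) z ^+ x *: G x + \sum_(x < N) z ^+ x *: H x.
Proof. by rewrite -big_split; apply: eq_bigr => x _; rewrite scalerDr. Qed.

End Polys.
Lemma sum_ext0 (V : nmodType) N1 N2 (g : nat -> V) : (N1 <= N2)%N ->
  (forall j, (N1 <= j)%N -> g j = 0) -> \sum_(j < N1) g j = \sum_(j < N2) g j.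
Proof.
move=> h hg; rewrite (big_ord_widen N2 g h) big_mkcond; apply: eq_bigr => j _.
by case: ltnP => // hj; rewrite hg.
Qed.

Lemma comb (F : fieldType) (R i sz : nat) (G w : nat -> F) :
  (forall j, (sz <= j)%N -> G j = 0) ->
  \sum_(j < sz) (if (R <= i + j)%N then 0 else G j * w (i + j)%N) =
  \sum_(j < R) (if (i <= j)%N then G (j - i)%N * w j else 0).
Proof.
move=> hG.
set h := fun j => if (R <= i + j)%N then 0 else G j * w (i + j)%N.
have e1 : \sum_(j < sz) h j = \sum_(j < sz + R) h j.
  apply: sum_ext0; first exact: leq_addr.
  by move=> j hj; rewrite /h hG // mul0r; case: ifP.
have e2 : \sum_(j < R) h j = \sum_(j < sz + R) h j.
  apply: sum_ext0; first exact: leq_addl.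
  by move=> j hj; rewrite /h ifT //; lia.
rewrite e1 -e2.
rewrite /h; case: (leqP i R) => hiR; last first.
  rewrite big1; last by move=> j _; rewrite ifT //; lia.
  by rewrite big1 // => j _; rewrite ifF //; have := ltn_ord j; lia.
rewrite -(big_mkord xpredT (fun j => if (R <= i + j)%N then 0 else G j * w (i + j)%N)).
rewrite -(big_mkord xpredT (fun j => if (i <= j)%N then G (j - i)%N * w j else 0)).
rewrite (@big_cat_nat _ _ _ (R - i) 0 R _ _ (leq0n _) (leq_subr i R)) /=.
have L1 : \sum_(R - i <= j < R) (if (R <= i + j)%N then 0 else G j * w (i + j)%N) = 0.
  by rewrite big1_seq // => j /andP [_]; rewrite mem_index_iota => hj; rewrite ifT //; lia.
rewrite L1 addr0 (@big_cat_nat _ _ _ i 0 R _ _ (leq0n _) hiR) /=.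
have L2 : \sum_(0 <= j < i) (if (i <= j)%N then G (j - i)%N * w j else 0) = 0.
  by rewrite big1_seq // => j /andP [_]; rewrite mem_index_iota => hj; rewrite ifF //; lia.
rewrite L2 add0r.
symmetry; rewrite -{1}(add0n i) big_addn.
rewrite !big_seq; apply: eq_bigr => j; rewrite mem_index_iota => hj.
rewrite ifT ?leq_addl // (ifF _ _ (_ : (R <= i + j)%N = false)); last by apply/negbTE; rewrite -ltnNge; lia.
by rewrite addnK addnC.
Qed.
Section Scal.
Variables (F : fieldType) (ell Kc p m n S : nat) (f : 'I_ell -> 'I_Kc -> F) (alpha : 'I_S -> F).
Hypothesis hfa : forall l k s, f l k != alpha s.
Local Notation R := (Rp p m n).

Definition DP l : {poly F} := \prod_(k < Kc) lin (f l k) ^+ R.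
Definition DPk l k : {poly F} := \prod_(k' < Kc | k' != k) lin (f l k') ^+ R.
Definition DPkk l k k' : {poly F} := \prod_(k'' < Kc | (k'' != k) && (k'' != k')) lin (f l k'') ^+ R.

Lemma tnz l k s : f l k - alpha s != 0.
Proof. by rewrite subr_eq0 hfa. Qed.

Lemma DP_h l z : (DP l).[z] = \prod_(k < Kc) (f l k - z) ^+ R.
Proof. by rewrite horner_prod; apply: eq_bigr => k _; rewrite horner_exp lin_horner. Qed.
Lemma DPk_h l k z : (DPk l k).[z] = \prod_(k' < Kc | k' != k) (f l k' - z) ^+ R.
Proof. by rewrite horner_prod; apply: eq_bigr => k' _; rewrite horner_exp lin_horner. Qed.
Lemma DPkk_h l k k' z : (DPkk l k k').[z] = \prod_(k'' < Kc | (k'' != k) && (k'' != k')) (f l k'' - z) ^+ R.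
Proof. by rewrite horner_prod; apply: eq_bigr => k'' _; rewrite horner_exp lin_horner. Qed.

Lemma Delta_D1 s l k : Delta p m n f alpha s l =
  (f l k - alpha s) ^+ R * \prod_(k' < Kc | k' != k) (f l k' - alpha s) ^+ R.
Proof. by rewrite /Delta (bigD1 k). Qed.

Lemma S_ZZ s l xa yb : Delta p m n f alpha s l * (alpha s ^+ xa * alpha s ^+ yb)
  = (DP l * 'X^(xa + yb)).[alpha s].
Proof. by rewrite hornerM DP_h hornerXn exprD. Qed.

Lemma S_PZ s l k yb e : Delta p m n f alpha s l * ((f l k - alpha s) ^+ R)^-1 * alpha s ^+ yb * (f l k - alpha s) ^+ e
  = (DPk l k * lin (f l k) ^+ e * 'X^yb).[alpha s].
Proof.
rewrite !hornerM DPk_h hornerXn horner_exp lin_horner (Delta_D1 s l k).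
have := tnz l k s; move: (f l k - alpha s) => t ht.
by field; rewrite expf_neq0.
Qed.

Lemma S_ZQ s l k xa e : Delta p m n f alpha s l * alpha s ^+ xa * ((f l k - alpha s) ^+ R)^-1 * (f l k - alpha s) ^+ e
  = ('X^xa * DPk l k * lin (f l k) ^+ e).[alpha s].
Proof.
rewrite !hornerM DPk_h hornerXn horner_exp lin_horner (Delta_D1 s l k).
have := tnz l k s; move: (f l k - alpha s) => t ht.
by field; rewrite expf_neq0.
Qed.

Lemma S_off s l k k' e1 e2 : k' != k ->
  Delta p m n f alpha s l * ((f l k - alpha s) ^+ R)^-1 * ((f l k' - alpha s) ^+ R)^-1
    * ((f l k - alpha s) ^+ e1 * (f l k' - alpha s) ^+ e2)
  = (DPkk l k k' * lin (f l k) ^+ e1 * lin (f l k') ^+ e2).[alpha s].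
Proof.
move=> hk; rewrite !hornerM DPkk_h !horner_exp !lin_horner (Delta_D1 s l k) (bigD1 k') //=.
have := tnz l k s; have := tnz l k' s.
move: (f l k - alpha s) (f l k' - alpha s) => t t' ht' ht.
by field; rewrite !expf_neq0.
Qed.

Definition qd l k i : {poly F} := \sum_(j < size (Psi p m n f l k))
  (if (R <= i + j)%N then cc p m n f l k j *: lin (f l k) ^+ (i + j - R) else 0).

Lemma Psi_h l k s : (Psi p m n f l k).[f l k - alpha s] = \prod_(k' < Kc | k' != k) (f l k' - alpha s) ^+ R.
Proof.
rewrite /Psi horner_prod; apply: eq_bigr => k' _.
by rewrite horner_exp hornerD hornerX hornerC; congr (_ ^+ _); rewrite addrC subrKA.
Qed.

Lemma S_diag s l k i :
  Delta p m n f alpha s l * (((f l k - alpha s) ^+ R)^-1 * ((f l k - alpha s) ^+ R)^-1) * (f l k - alpha s) ^+ i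
  = \sum_(j < R) (if (i <= j)%N then cc p m n f l k (j - i)%N * ((f l k - alpha s) ^+ (R - j))^-1 else 0)
    + (qd l k i).[alpha s].
Proof.
rewrite (Delta_D1 s l k) -Psi_h horner_coef.
have ht := tnz l k s.
have -> : (f l k - alpha s) ^+ R *
  (\sum_(j < size (Psi p m n f l k)) (Psi p m n f l k)`_j * (f l k - alpha s) ^+ j) *
  (((f l k - alpha s) ^+ R)^-1 * ((f l k - alpha s) ^+ R)^-1) * (f l k - alpha s) ^+ i
  = \sum_(j < size (Psi p m n f l k)) ((Psi p m n f l k)`_j * (f l k - alpha s) ^+ j * (f l k - alpha s) ^+ i / (f l k - alpha s) ^+ R).
  rewrite -!mulr_suml; field; by rewrite expf_neq0.
rewrite /qd horner_sum.
have C : \sum_(j < R) (if (i <= j)%N then cc p m n f l k (j - i)%N * ((f l k - alpha s) ^+ (R - j))^-1 else 0)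
  = \sum_(j < size (Psi p m n f l k)) (if (R <= i + j)%N then 0 else cc p m n f l k j * ((f l k - alpha s) ^+ (R - (i + j)%N))^-1).
  symmetry; apply: (@comb F R i _ (cc p m n f l k) (fun j => ((f l k - alpha s) ^+ (R - j))^-1)).
  by move=> j hj; rewrite /cc nth_default.
rewrite C.
rewrite -big_split /=; apply: eq_bigr => j _.
case: leqP => h.
  rewrite hornerZ horner_exp lin_horner add0r /cc.
  move: (f l k - alpha s) ht => t ht.
  rewrite -[_ * t ^+ j * t ^+ i]mulrA -exprD (_ : (j + i = (i + j - R) + R)%N); last by lia.
  by rewrite exprD; field; rewrite expf_neq0.
rewrite horner0 addr0 /cc.
move: (f l k - alpha s) ht => t ht.
have e : t ^+ R = t ^+ (R - (i + j)) * t ^+ (j + i) by rewrite -exprD; congr (_ ^+ _); lia.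
rewrite -[_ * t ^+ j * t ^+ i]mulrA -exprD e.
by field; rewrite !expf_neq0.
Qed.
End Scal.
Section Sizes.
Variables (F : fieldType) (ell Kc X p m n : nat) (f : 'I_ell -> 'I_Kc -> F).
Hypotheses (hX : (0 < X)%N) (hKc : (0 < Kc)%N) (hp : (0 < p)%N) (hm : (0 < m)%N) (hn : (0 < n)%N).
Local Notation R := (Rp p m n).
Local Notation D := (Rp p m n * Kc + 2 * X - 1)%N.
Local Notation N0 := (N0 Kc X p m n).

Lemma card_neq (k : 'I_Kc) : #|(fun k' : 'I_Kc => k' != k)| = Kc.-1.
Proof. by have h := cardC1 k; rewrite card_ord in h; rewrite -h; apply: eq_card => x. Qed.

Lemma card_neq2 (k k' : 'I_Kc) : k' != k -> #|(fun k'' : 'I_Kc => (k'' != k) && (k'' != k'))| = Kc.-2.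
Proof.
move=> hk; have := cardD1 k' (fun k'' : 'I_Kc => k'' != k).
rewrite card_neq (_ : k' \in _ = true) ?add1n; last by rewrite unfold_in.
move=> e; rewrite e /=.
by apply: eq_card => x; rewrite !inE andbC.
Qed.

Lemma card_true : #|(fun _ : 'I_Kc => true)| = Kc.
Proof. by have h := card_ord Kc; rewrite -[in RHS]h; apply: eq_card. Qed.

Lemma ar_facts : [/\ (p <= p * m)%N, (p * m <= R)%N, (p * m - 1 <= DE p m n)%N,
   (R - p * m + p - 1 <= DE p m n)%N & (DE p m n <= R - 1)%N].
Proof.
have h1 : (p <= p * m)%N by rewrite leq_pmulr.
have h2 : (p * m <= R)%N by rewrite /Rp leq_pmulr.
have h3 : (p * m <= p * m * n)%N by rewrite leq_pmulr.
rewrite /DE /Rp; split => //; lia.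
Qed.

Lemma N0_le_D : (N0 <= D)%N.
Proof.
case: ar_facts => h1 h2 h3 h4 h5.
rewrite /Defs.N0 /Rp.
have e : (p * m * n * (Kc - 1) = p * m * n * Kc - p * m * n)%N by rewrite mulnBr muln1.
have e2 : (p * m * n <= p * m * n * Kc)%N by rewrite leq_pmulr.
move: h5; rewrite /Rp => h5; lia.
Qed.

Lemma e1_bound (pi mi : nat) : (pi < p)%N -> (mi < m)%N -> (pi + p * mi <= p * m - 1)%N.
Proof.
move=> h1 h2; have : (p * mi.+1 <= p * m)%N by rewrite leq_mul2l h2 orbT.
rewrite mulnS; lia.
Qed.

Lemma e2_bound (pj ni : nat) : (pj < p)%N -> (ni < n)%N -> (p - pj.+1 + p * m * ni <= R - p * m + p - 1)%N.
Proof.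
move=> h1 h2; have : (p * m * ni.+1 <= p * m * n)%N by rewrite leq_mul2l h2 orbT.
rewrite mulnS /Rp; lia.
Qed.

Lemma size_linR (u : F) : (size (lin u ^+ R)%R <= R.+1)%N.
Proof. by rewrite size_lin_exp. Qed.

Lemma size_DP l : (size (DP p m n f l) <= (Kc * R).+1)%N.
Proof.
have := @size_prod_le F 'I_Kc (fun _ => true) (fun k => lin (f l k) ^+ R) R (fun k _ => size_linR _).
by rewrite card_true.
Qed.

Lemma size_DPk l k : (size (DPk p m n f l k) <= (Kc.-1 * R).+1)%N.
Proof.
have := @size_prod_le F 'I_Kc (fun k' => k' != k) (fun k => lin (f l k) ^+ R) R (fun k _ => size_linR _).
by rewrite card_neq.
Qed.

Lemma size_DPkk l k k' : k' != k -> (size (DPkk p m n f l k k') <= (Kc.-2 * R).+1)%N.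
Proof.
move=> hk.
have := @size_prod_le F 'I_Kc (fun k'' => (k'' != k) && (k'' != k')) (fun k => lin (f l k) ^+ R) R (fun k _ => size_linR _).
by rewrite card_neq2.
Qed.

Lemma sz_ZZ l xa yb : (xa < X)%N -> (yb < X)%N -> (size (DP p m n f l * 'X^(xa + yb))%R <= D)%N.
Proof.
move=> h1 h2; apply: leq_trans (size_mul_le2 (size_DP l) (eq_leq (size_polyXn _ _))) _.
rewrite (mulnC Kc); lia.
Qed.

Lemma KcR : (Kc.-1 * R + R = R * Kc)%N.
Proof. by rewrite addnC -mulSn prednK // mulnC. Qed.

Lemma sz_PZ l k yb e : (yb < X)%N -> (e <= p * m - 1)%N ->
  (size (DPk p m n f l k * lin (f l k) ^+ e * 'X^yb)%R <= N0)%N.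
Proof.
move=> h1 h2.
apply: leq_trans (size_mul_le2 (size_mul_le2 (size_DPk l k) (eq_leq (size_lin_exp _ _))) (eq_leq (size_polyXn _ _))) _.
case: ar_facts => a1 a2 a3 a4 a5.
have := KcR; rewrite /Defs.N0 /Rp in a2 a4 a5 *; rewrite mulnBr muln1 (mulnC _ Kc); lia.
Qed.

Lemma sz_ZQ l k xa e : (xa < X)%N -> (e <= R - p * m + p - 1)%N ->
  (size ('X^xa * DPk p m n f l k * lin (f l k) ^+ e)%R <= N0)%N.
Proof.
move=> h1 h2.
apply: leq_trans (size_mul_le2 (size_mul_le2 (eq_leq (size_polyXn _ _)) (size_DPk l k)) (eq_leq (size_lin_exp _ _))) _.
case: ar_facts => a1 a2 a3 a4 a5.
have := KcR; rewrite /Defs.N0 /Rp in a2 a4 a5 h2 *; rewrite mulnBr muln1 (mulnC _ Kc); lia.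
Qed.

Lemma sz_off l k k' e1 e2 : k' != k -> (e1 <= p * m - 1)%N -> (e2 <= R - p * m + p - 1)%N ->
  (size (DPkk p m n f l k k' * lin (f l k) ^+ e1 * lin (f l k') ^+ e2)%R <= N0)%N.
Proof.
move=> hk h1 h2.
apply: leq_trans (size_mul_le2 (size_mul_le2 (size_DPkk l hk) (eq_leq (size_lin_exp _ _))) (eq_leq (size_lin_exp _ _))) _.
have hK2 : (1 < Kc)%N.
  case: (ltnP 1 Kc) => // hle; case/eqP: hk; apply: ord_inj.
  have := ltn_ord k; have := ltn_ord k'; lia.
have e : (Kc.-2 * R + R = Kc.-1 * R)%N by rewrite addnC -mulSn; congr (_ * _)%N; lia.
case: ar_facts => a1 a2 a3 a4 a5.
have := KcR; rewrite /Defs.N0 /Rp in a2 a4 a5 h2 e *; rewrite mulnBr muln1 (mulnC _ Kc); lia.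
Qed.
Lemma size_Psi l k : (size (Psi p m n f l k) <= (Kc.-1 * R).+1)%N.
Proof.
have h : forall c : F, (size (('X + c%:P) ^+ R)%R <= R.+1)%N.
  by move=> c; rewrite (_ : 'X + c%:P = 'X - (-c)%:P) ?size_exp_XsubC // polyCN opprK.
have := @size_prod_le F 'I_Kc (fun k' => k' != k) (fun k' => ('X + (f l k' - f l k)%:P) ^+ R) R (fun k _ => h _).
by rewrite card_neq.
Qed.

Lemma sz_qd l k i : (i < R + p - 1)%N -> (size (qd p m n f l k i) <= N0)%N.
Proof.
move=> hi; apply: size_sum_le => j _.
case: ifP => h; last by rewrite size_poly0.
apply: leq_trans (size_scale_leq _ _) _; rewrite size_lin_exp.
have hj := leq_trans (ltn_ord j) (size_Psi l k).
case: ar_facts => a1 a2 a3 a4 a5.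
have := KcR; rewrite /Defs.N0 /Rp in a2 a4 a5 hi hj *; rewrite mulnBr muln1 (mulnC _ Kc); lia.
Qed.
End Sizes.
Lemma sum_split (R : nmodType) (p b : nat) (hb : (0 < b)%N) (G : 'I_(p * b) -> R) :
  \sum_(j < p * b) G j = \sum_(i < p) \sum_(r < b) G (bidx i r).
Proof.
rewrite pair_big /=.
have h1 (j : 'I_(p * b)) : (j %/ b < p)%N by rewrite ltn_divLR // ltn_ord.
have h2 (j : 'I_(p * b)) : (j %% b < b)%N by rewrite ltn_mod.
rewrite (reindex (fun x : 'I_p * 'I_b => bidx x.1 x.2)) //.
exists (fun j => (Ordinal (h1 j), Ordinal (h2 j))).
  move=> [i r] _ /=; congr pair; apply: val_inj => /=.
    by rewrite divnMDl // divn_small // addn0.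
  by rewrite modnMDl modn_small.
move=> j _; apply: val_inj => /=; by rewrite -divn_eq.
Qed.
Lemma blk_mul (R : pzSemiRingType) (m p n a b c : nat) (hb : (0 < b)%N)
  (A : 'M[R]_(m * a, p * b)) (B : 'M[R]_(p * b, n * c)) (i : 'I_m) (j : 'I_n) :
  blk (A *m B) i j = \sum_(k < p) blk A i k *m blk B k j.
Proof.
apply/matrixP => r s; rewrite !mxE summxE.
rewrite (@sum_split _ p b hb); apply: eq_bigr => k _; rewrite !mxE.
by apply: eq_bigr => t _; rewrite !mxE.
Qed.
Lemma sum_if_eq (V : nmodType) (N e : nat) (G : nat -> V) : (e < N)%N ->
  \sum_(i < N) (if e == i then G i else 0) = G e.
Proof.
move=> he; rewrite (bigD1 (Ordinal he)) //= eqxx big1 ?addr0 // => i hi.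
case: eqP => // ei; case/eqP: hi; apply: val_inj => /=; by rewrite ei.
Qed.

Lemma expo_bound (p m n pi mi pj ni : nat) : (pi < p)%N -> (mi < m)%N -> (pj < p)%N -> (ni < n)%N ->
  (pi + p * mi + (p - pj.+1) + p * m * ni < p * m * n + p - 1)%N.
Proof.
move=> h1 h2 h3 h4.
have e1 : (p * mi <= p * (m - 1))%N by rewrite leq_mul2l; apply/orP; right; lia.
have e2 : (p * m * ni <= p * m * (n - 1))%N by rewrite leq_mul2l; apply/orP; right; lia.
have e3 : (p * m * (n - 1) + p * m = p * m * n)%N.
  by rewrite -mulnSr; congr (_ * _)%N; lia.
have e4 : (p * (m - 1) + p = p * m)%N.
  by rewrite -mulnSr; congr (_ * _)%N; lia.
lia.
Qed.

Section PQ.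
Lemma PQ_expand (F : fieldType) (p m n a b c : nat) (A : 'M[F]_(m * a, p * b)) (B : 'M[F]_(p * b, n * c)) (t u : F) :
  Ppoly A t *m Qpoly m B u = \sum_(mi < m) \sum_(pi < p) \sum_(pj < p) \sum_(ni < n)
    (t ^+ (pi + p * mi) * u ^+ (p - pj.+1 + p * m * ni)) *: (blk A mi pi *m blk B pj ni).
Proof.
rewrite /Ppoly mulmx_suml; apply: eq_bigr => mi _.
rewrite mulmx_suml; apply: eq_bigr => pi _.
rewrite -scalemxAl /Qpoly mulmx_sumr scaler_sumr; apply: eq_bigr => pj _.
rewrite mulmx_sumr scaler_sumr; apply: eq_bigr => ni _.
by rewrite -scalemxAr scalerA.
Qed.

Lemma PQ_C (F : fieldType) (p m n a b c : nat) (A : 'M[F]_(m * a, p * b)) (B : 'M[F]_(p * b, n * c)) (t : F) :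
  Ppoly A t *m Qpoly m B t = \sum_(i < Rp p m n + p - 1) t ^+ i *: Cmat A B i.+1.
Proof.
rewrite PQ_expand /Cmat /Cexp /=; symmetry.
under eq_bigr => i _ do rewrite scaler_sumr.
rewrite exchange_big; apply: eq_bigr => mi _.
under eq_bigr => i _ do rewrite scaler_sumr.
rewrite exchange_big; apply: eq_bigr => pi _.
under eq_bigr => i _ do rewrite scaler_sumr.
rewrite exchange_big; apply: eq_bigr => pj _.
under eq_bigr => i _ do rewrite scaler_sumr.
rewrite exchange_big; apply: eq_bigr => ni _.
under eq_bigr => i _ do rewrite (fun_if (fun M => t ^+ i *: M)) scaler0.
rewrite (@sum_if_eq _ _ _ (fun i => t ^+ i *: (blk A mi pi *m blk B pj ni))).
  by rewrite -exprD !addnA.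
by rewrite /Rp; apply: expo_bound.
Qed.
End PQ.
Lemma idx_eq (p m n pi pj mi mi' ni ni' : nat) : (0 < p)%N -> (pi < p)%N -> (pj < p)%N ->
  (mi < m)%N -> (mi' < m)%N ->
  (pi + p * mi' + (p - pj.+1) + p * m * ni' == (p + p * mi + p * m * ni).-1)%N =
  [&& mi' == mi, pi == pj & ni' == ni].
Proof.
move=> hp hpi hpj hmi hmi'.
apply/idP/idP; last first.
  by case/and3P => /eqP -> /eqP -> /eqP ->; apply/eqP; lia.
move/eqP => E.
have Eu : ((ni' * m + mi') * p = p * mi' + p * m * ni')%N by ring.
have Ev : ((ni * m + mi) * p = p * mi + p * m * ni)%N by ring.
have E2 : ((ni' * m + mi') * p + pi = (ni * m + mi) * p + pj)%N by lia.
have epi : pi = pj.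
  by have := congr1 (modn^~ p) E2; rewrite /= !modnMDl !modn_small.
have E3 : (ni' * m + mi' = ni * m + mi)%N.
  apply/eqP; rewrite -(eqn_pmul2r hp); apply/eqP; lia.
have em : mi' = mi.
  by have := congr1 (modn^~ m) E3; rewrite /= !modnMDl !modn_small.
have hm : (0 < m)%N by lia.
have en : ni' = ni.
  have := congr1 (divn^~ m) E3; rewrite /= !divnMDl // !divn_small //.
  by rewrite !addn0.
by rewrite em epi en !eqxx.
Qed.
Lemma Cmat_E (F : fieldType) (p m n a b c : nat) (hp : (0 < p)%N)
  (A : 'M[F]_(m * a, p * b)) (B : 'M[F]_(p * b, n * c)) (mi : 'I_m) (ni : 'I_n) :
  Cmat A B (p + p * mi + p * m * ni)%N = \sum_(pi < p) blk A mi pi *m blk B pi ni.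
Proof.
rewrite /Cmat /Cexp.
under eq_bigr => mi' _ do under eq_bigr => pi _ do under eq_bigr => pj _ do
  under eq_bigr => ni' _ do rewrite idx_eq ?ltn_ord //.
rewrite (bigD1 mi) //= [X in _ + X]big1 ?addr0; last first.
  move=> mi' hmi'; apply: big1 => pi _; apply: big1 => pj _; apply: big1 => ni' _.
  by case: eqP => // /val_inj e; rewrite e eqxx in hmi'.
apply: eq_bigr => pi _; rewrite (bigD1 pi) //= [X in _ + X]big1 ?addr0; last first.
  move=> pj hpj; apply: big1 => ni' _; rewrite eqxx /=.
  by case: eqP => // /val_inj e; rewrite e eqxx in hpj.
rewrite (bigD1 ni) //= [X in _ + X]big1 ?addr0 ?eqxx //; last first.
move=> ni' hni'; rewrite ?eqxx /=.
by case: eqP => // /val_inj e; rewrite e eqxx in hni'.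
Qed.
Ltac push := under eq_bigr => ? _ do rewrite scaler_sumr; rewrite exchange_big /=.

Section Main.
Variables (F : fieldType) (ell Kc X p m n a b c S : nat) (f : 'I_ell -> 'I_Kc -> F) (alpha : 'I_S -> F).
Hypotheses (hX : (0 < X)%N) (hKc : (0 < Kc)%N) (hp : (0 < p)%N) (hm : (0 < m)%N) (hn : (0 < n)%N).
Hypothesis hfa : forall l k s, f l k != alpha s.
Local Notation R := (Rp p m n).
Local Notation D := (Rp p m n * Kc + 2 * X - 1)%N.
Local Notation N0 := (N0 Kc X p m n).

Lemma mulmx_ss (I J : finType) (u : I -> F) (v : J -> F) (M : I -> 'M[F]_(a, b)) (N : J -> 'M[F]_(b, c)) :
  (\sum_i u i *: M i) *m (\sum_j v j *: N j) = \sum_i \sum_j (u i * v j) *: (M i *m N j).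
Proof.
rewrite mulmx_suml; apply: eq_bigr => i _; rewrite mulmx_sumr; apply: eq_bigr => j _.
by rewrite -scalemxAl -scalemxAr scalerA.
Qed.

Lemma P_mul (A : 'M[F]_(m * a, p * b)) (M : 'M[F]_(b, c)) t :
  Ppoly A t *m M = \sum_(mi < m) \sum_(pi < p) t ^+ (pi + p * mi) *: (blk A mi pi *m M).
Proof.
rewrite /Ppoly mulmx_suml; apply: eq_bigr => mi _; rewrite mulmx_suml; apply: eq_bigr => pi _.
by rewrite -scalemxAl.
Qed.

Lemma Q_mul (B : 'M[F]_(p * b, n * c)) (M : 'M[F]_(a, b)) t :
  M *m Qpoly m B t = \sum_(pj < p) \sum_(ni < n) t ^+ (p - pj.+1 + p * m * ni) *: (M *m blk B pj ni).
Proof.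
rewrite /Qpoly mulmx_sumr; apply: eq_bigr => pj _; rewrite mulmx_sumr; apply: eq_bigr => ni _.
by rewrite -scalemxAr.
Qed.

Definition TZZ (ZA : 'I_ell -> 'I_X -> 'M[F]_(a, b)) (ZB : 'I_ell -> 'I_X -> 'M[F]_(b, c)) l x :=
  \sum_(xa < X) \sum_(yb < X) (DP p m n f l * 'X^(xa + yb))`_x *: (ZA l xa *m ZB l yb).

Lemma part_ZZ ZA ZB s l :
  Delta p m n f alpha s l *: (\sum_(xa < X) \sum_(yb < X) (alpha s ^+ xa * alpha s ^+ yb) *: (ZA l xa *m ZB l yb))
  = \sum_(x < D) alpha s ^+ x *: TZZ ZA ZB l x.
Proof.
symmetry; rewrite /TZZ; push; rewrite [RHS]scaler_sumr; apply: eq_bigr => xa _.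
push; rewrite [RHS]scaler_sumr; apply: eq_bigr => yb _.
rewrite scalerA S_ZZ; symmetry; apply: peval_scale; exact: sz_ZZ.
Qed.

Definition TPZ (A : 'I_ell -> 'I_Kc -> 'M[F]_(m * a, p * b)) (ZB : 'I_ell -> 'I_X -> 'M[F]_(b, c)) l x :=
  \sum_(k < Kc) \sum_(yb < X) \sum_(mi < m) \sum_(pi < p)
    (DPk p m n f l k * lin (f l k) ^+ (pi + p * mi) * 'X^yb)`_x *: (blk (A l k) mi pi *m ZB l yb).

Lemma part_PZ A ZB s l :
  Delta p m n f alpha s l *: (\sum_(k < Kc) \sum_(yb < X)
     (((f l k - alpha s) ^+ R)^-1 * alpha s ^+ yb) *: (Ppoly (A l k) (f l k - alpha s) *m ZB l yb))
  = \sum_(x < D) alpha s ^+ x *: TPZ A ZB l x.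
Proof.
symmetry; rewrite /TPZ; push; rewrite [RHS]scaler_sumr; apply: eq_bigr => k _.
push; rewrite [RHS]scaler_sumr; apply: eq_bigr => yb _.
rewrite P_mul scalerA; push; rewrite [RHS]scaler_sumr; apply: eq_bigr => mi _.
push; rewrite [RHS]scaler_sumr; apply: eq_bigr => pi _.
rewrite scalerA !mulrA S_PZ //; symmetry; apply: peval_scale.
apply: leq_trans (N0_le_D _ _ _ _ _) => //; apply: sz_PZ => //; exact: (@e1_bound Kc X p m n hX hKc hp hm hn).
Qed.

Definition TZQ (B : 'I_ell -> 'I_Kc -> 'M[F]_(p * b, n * c)) (ZA : 'I_ell -> 'I_X -> 'M[F]_(a, b)) l x :=
  \sum_(xa < X) \sum_(k < Kc) \sum_(pj < p) \sum_(ni < n)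
    ('X^xa * DPk p m n f l k * lin (f l k) ^+ (p - pj.+1 + p * m * ni))`_x *: (ZA l xa *m blk (B l k) pj ni).

Lemma part_ZQ B ZA s l :
  Delta p m n f alpha s l *: (\sum_(xa < X) \sum_(k < Kc)
     (alpha s ^+ xa * ((f l k - alpha s) ^+ R)^-1) *: (ZA l xa *m Qpoly m (B l k) (f l k - alpha s)))
  = \sum_(x < D) alpha s ^+ x *: TZQ B ZA l x.
Proof.
symmetry; rewrite /TZQ; push; rewrite [RHS]scaler_sumr; apply: eq_bigr => xa _.
push; rewrite [RHS]scaler_sumr; apply: eq_bigr => k _.
rewrite Q_mul scalerA; push; rewrite [RHS]scaler_sumr; apply: eq_bigr => pj _.
push; rewrite [RHS]scaler_sumr; apply: eq_bigr => ni _.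
rewrite scalerA !mulrA S_ZQ //; symmetry; apply: peval_scale.
apply: leq_trans (N0_le_D _ _ _ _ _) => //; apply: sz_ZQ => //; exact: (@e2_bound Kc X p m n hX hKc hp hm hn).
Qed.

Definition Toff (A : 'I_ell -> 'I_Kc -> 'M[F]_(m * a, p * b)) (B : 'I_ell -> 'I_Kc -> 'M[F]_(p * b, n * c)) l x :=
  \sum_(k < Kc) \sum_(k' < Kc | k' != k) \sum_(mi < m) \sum_(pi < p) \sum_(pj < p) \sum_(ni < n)
    (DPkk p m n f l k k' * lin (f l k) ^+ (pi + p * mi) * lin (f l k') ^+ (p - pj.+1 + p * m * ni))`_x
      *: (blk (A l k) mi pi *m blk (B l k') pj ni).

Lemma part_off A B s l :
  Delta p m n f alpha s l *: (\sum_(k < Kc) \sum_(k' < Kc | k' != k)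
     (((f l k - alpha s) ^+ R)^-1 * ((f l k' - alpha s) ^+ R)^-1) *:
       (Ppoly (A l k) (f l k - alpha s) *m Qpoly m (B l k') (f l k' - alpha s)))
  = \sum_(x < D) alpha s ^+ x *: Toff A B l x.
Proof.
symmetry; rewrite /Toff; push; rewrite [RHS]scaler_sumr; apply: eq_bigr => k _.
push; rewrite [RHS]scaler_sumr; apply: eq_bigr => k' hk.
rewrite PQ_expand scalerA; push; rewrite [RHS]scaler_sumr; apply: eq_bigr => mi _.
push; rewrite [RHS]scaler_sumr; apply: eq_bigr => pi _.
push; rewrite [RHS]scaler_sumr; apply: eq_bigr => pj _.
push; rewrite [RHS]scaler_sumr; apply: eq_bigr => ni _.
rewrite scalerA.
have := S_off p m n hfa s l (pi + p * mi)%N (p - pj.+1 + p * m * ni)%N hk; rewrite !mulrA => ->.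
symmetry; apply: peval_scale.
apply: leq_trans (N0_le_D _ _ _ _ _) => //; apply: sz_off => //; [exact: (@e1_bound Kc X p m n hX hKc hp hm hn) | exact: (@e2_bound Kc X p m n hX hKc hp hm hn)].
Qed.
Definition Tdiag (A : 'I_ell -> 'I_Kc -> 'M[F]_(m * a, p * b)) (B : 'I_ell -> 'I_Kc -> 'M[F]_(p * b, n * c)) l x :=
  \sum_(k < Kc) \sum_(i < R + p - 1) (qd p m n f l k i)`_x *: Cmat (A l k) (B l k) i.+1.

Definition polar (A : 'I_ell -> 'I_Kc -> 'M[F]_(m * a, p * b)) (B : 'I_ell -> 'I_Kc -> 'M[F]_(p * b, n * c)) (s : 'I_S) l :=
  \sum_(k < Kc) \sum_(i < R) ((f l k - alpha s) ^+ (R - i))^-1 *: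
     \sum_(i' < i.+1) cc p m n f l k (i - i') *: Cmat (A l k) (B l k) i'.+1.

Lemma diag_k (A : 'I_ell -> 'I_Kc -> 'M[F]_(m * a, p * b)) (B : 'I_ell -> 'I_Kc -> 'M[F]_(p * b, n * c)) s l k :
  Delta p m n f alpha s l *: ((((f l k - alpha s) ^+ R)^-1 * ((f l k - alpha s) ^+ R)^-1) *:
     (Ppoly (A l k) (f l k - alpha s) *m Qpoly m (B l k) (f l k - alpha s)))
  = \sum_(i < R) ((f l k - alpha s) ^+ (R - i))^-1 *:
       \sum_(i' < i.+1) cc p m n f l k (i - i') *: Cmat (A l k) (B l k) i'.+1
    + \sum_(x < D) alpha s ^+ x *: \sum_(i < R + p - 1) (qd p m n f l k i)`_x *: Cmat (A l k) (B l k) i.+1.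
Proof.
rewrite PQ_C scalerA scaler_sumr.
under eq_bigr => i _ do rewrite scalerA (S_diag p m n hfa) scalerDl.
rewrite big_split /=; congr (_ + _); last first.
  symmetry; push; apply: eq_bigr => i _; symmetry; apply: peval_scale.
  apply: (leq_trans _ (N0_le_D hX hKc hp hm hn)); exact: (sz_qd f hX hKc hp hm hn).
under eq_bigr => i _ do rewrite scaler_suml.
rewrite exchange_big /=; apply: eq_bigr => j _.
have hj : (j.+1 <= R + p - 1)%N by have := ltn_ord j; lia.
rewrite scaler_sumr (big_ord_widen (R + p - 1)
  (fun i => ((f l k - alpha s) ^+ (R - j))^-1 *: (cc p m n f l k (j - i) *: Cmat (A l k) (B l k) i.+1)) hj).
rewrite [RHS]big_mkcond; apply: eq_bigr => i _; rewrite ltnS.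
case: ifP => _; last by rewrite scale0r.
by rewrite scalerA mulrC.
Qed.

Lemma part_diag A B s l :
  Delta p m n f alpha s l *: (\sum_(k < Kc)
     (((f l k - alpha s) ^+ R)^-1 * ((f l k - alpha s) ^+ R)^-1) *:
       (Ppoly (A l k) (f l k - alpha s) *m Qpoly m (B l k) (f l k - alpha s)))
  = polar A B s l + \sum_(x < D) alpha s ^+ x *: Tdiag A B l x.
Proof.
rewrite scaler_sumr; under eq_bigr => k _ do rewrite diag_k.
rewrite big_split /=; congr (_ + _).
by symmetry; rewrite /Tdiag; push.
Qed.
Lemma coef_add5 (V : lmodType F) N z (G1 G2 G3 G4 G5 : nat -> V) :
  \sum_(x < N) z ^+ x *: (G1 x + G2 x + G3 x + G4 x + G5 x) =
  \sum_(x < N) z ^+ x *: G1 x + \sum_(x < N) z ^+ x *: G2 x + \sum_(x < N) z ^+ x *: G3 x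
  + \sum_(x < N) z ^+ x *: G4 x + \sum_(x < N) z ^+ x *: G5 x.
Proof. by rewrite -!big_split; apply: eq_bigr => x _; rewrite !scalerDr. Qed.

Definition Tall A B ZA ZB l x :=
  Tdiag A B l x + Toff A B l x + TPZ A ZB l x + TZQ B ZA l x + TZZ ZA ZB l x.

Lemma per_l A B ZA ZB s l :
  Atil n f alpha A ZA s l *m Btil m f alpha B ZB s l
  = polar A B s l + \sum_(x < D) alpha s ^+ x *: Tall A B ZA ZB l x.
Proof.
rewrite /Atil /Btil -scalemxAl mulmxDl !mulmxDr !mulmx_ss.
under eq_bigr => k _ do rewrite (bigD1 k) //=.
rewrite big_split /= !scalerDr part_diag part_off part_PZ part_ZQ part_ZZ.
rewrite /Tall (coef_add5 _ _ (Tdiag A B l) (Toff A B l) (TPZ A ZB l) (TZQ B ZA l) (TZZ ZA ZB l)).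
by rewrite !addrA.
Qed.
Lemma Tall_high A B ZA ZB l y : (N0 <= y)%N -> Tall A B ZA ZB l y = TZZ ZA ZB l y.
Proof.
move=> hy.
have z0 (q : {poly F}) (d e : nat) (M : 'M[F]_(d, e)) : (size q <= N0)%N -> q`_y *: M = 0.
  by move=> hq; rewrite nth_default ?scale0r //; apply: leq_trans hq hy.
rewrite /Tall /Tdiag /Toff /TPZ /TZQ.
rewrite big1 ?add0r; last first.
  move=> k _; apply: big1 => i _; apply: z0; exact: (sz_qd f hX hKc hp hm hn).
rewrite big1 ?add0r; last first.
  move=> k _; apply: big1 => k' hk; apply: big1 => mi _; apply: big1 => pi _.
  apply: big1 => pj _; apply: big1 => ni _; apply: z0; apply: sz_off => //.
    exact: (@e1_bound Kc X p m n hX hKc hp hm hn).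
  exact: (@e2_bound Kc X p m n hX hKc hp hm hn).
rewrite big1 ?add0r; last first.
  move=> k _; apply: big1 => yb _; apply: big1 => mi _; apply: big1 => pi _.
  apply: z0; apply: sz_PZ => //; exact: (@e1_bound Kc X p m n hX hKc hp hm hn).
rewrite big1 ?add0r //.
move=> xa _; apply: big1 => k _; apply: big1 => pj _; apply: big1 => ni _.
apply: z0; apply: sz_ZQ => //; exact: (@e2_bound Kc X p m n hX hKc hp hm hn).
Qed.

Lemma fracSum_add (W1 W2 : 'I_ell -> 'I_Kc -> nat -> 'M[F]_(a, c)) s :
  fracSum p m n f alpha (fun l k i => W1 l k i + W2 l k i) s
  = fracSum p m n f alpha W1 s + fracSum p m n f alpha W2 s.
Proof.
rewrite /fracSum -big_split /=; apply: eq_bigr => l _.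
rewrite -big_split /=; apply: eq_bigr => k _.
rewrite -big_split /=; apply: eq_bigr => i _.
rewrite -scalerDr -big_split /=; congr (_ *: _); apply: eq_bigr => i' _.
by rewrite scalerDr.
Qed.

Lemma polar_frac A B s : \sum_(l < ell) polar A B s l
  = fracSum p m n f alpha (fun l k i => Cmat (A l k) (B l k) i) s.
Proof. by []. Qed.

Lemma part_b :
  (exists I : (('I_ell -> 'I_Kc -> 'M[F]_(m * a, p * b)) ->
               ('I_ell -> 'I_Kc -> 'M[F]_(p * b, n * c)) ->
               ('I_ell -> 'I_X -> 'M[F]_(a, b)) ->
               ('I_ell -> 'I_X -> 'M[F]_(b, c)) -> nat -> 'M[F]_(a, c)),
     (exists G : (('I_ell -> 'I_X -> 'M[F]_(a, b)) ->
                  ('I_ell -> 'I_X -> 'M[F]_(b, c)) -> nat -> 'M[F]_(a, c)),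
        forall A B ZA ZB (x : nat), (N0 < x)%N -> I A B ZA ZB x = G ZA ZB x)
     /\
     forall (A : 'I_ell -> 'I_Kc -> 'M[F]_(m * a, p * b))
            (B : 'I_ell -> 'I_Kc -> 'M[F]_(p * b, n * c))
            (ZA : 'I_ell -> 'I_X -> 'M[F]_(a, b)) (ZB : 'I_ell -> 'I_X -> 'M[F]_(b, c))
            (Z' : nat -> 'M[F]_(a, c)) (Z'' : 'I_ell -> 'I_Kc -> nat -> 'M[F]_(a, c)),
       (forall (l : 'I_ell) (k : 'I_Kc) (i : nat), inEset p m n i -> Z'' l k i = 0) ->
       forall s : 'I_S,
         @Yans F ell Kc X p m n a b c S f alpha A B ZA ZB Z' Z'' s
         = @fracSum F ell Kc p m n a c S f alpha
             (fun l k i => @Cmat F p m n a b c (A l k) (B l k) i + Z'' l k i) s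
           + \sum_(x < Rp p m n * Kc + 2 * X - 1)
               alpha s ^+ x *:
                 (if (x.+1 <= N0)%N then I A B ZA ZB x.+1 + Z' x.+1
                  else I A B ZA ZB x.+1)).
Proof.
exists (fun A B ZA ZB x => \sum_(l < ell) Tall A B ZA ZB l x.-1).
split.
  exists (fun ZA ZB x => \sum_(l < ell) TZZ ZA ZB l x.-1).
  move=> A B ZA ZB x hx; apply: eq_bigr => l _; apply: Tall_high; lia.
move=> A B ZA ZB Z' Z'' _ s.
rewrite /Yans /Mtil fracSum_add -polar_frac.
under eq_bigr => l _ do rewrite per_l.
rewrite big_split /=.
under [X in _ = _ + X]eq_bigr => x _ do rewrite (fun_if (fun M => alpha s ^+ x *: M)) scalerDr.
have E : \sum_(x < D) (if (x < N0)%N then alpha s ^+ x *: \sum_(l < ell) Tall A B ZA ZB l x + alpha s ^+ x *: Z' x.+1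
      else alpha s ^+ x *: \sum_(l < ell) Tall A B ZA ZB l x)
    = \sum_(l < ell) \sum_(x < D) alpha s ^+ x *: Tall A B ZA ZB l x + \sum_(x < N0) alpha s ^+ x *: Z' x.+1.
  rewrite (big_ord_widen D (fun x => alpha s ^+ x *: Z' x.+1) (N0_le_D hX hKc hp hm hn)) [X in _ = _ + X]big_mkcond.
  rewrite [X in _ = X + _]exchange_big /= -big_split /=; apply: eq_bigr => x _.
  by rewrite -scaler_sumr; case: ifP => _; rewrite ?addr0.
rewrite E.
set P := \sum_(l < ell) polar A B s l.
set T := \sum_(l < ell) \sum_(x < D) _.
set Z := \sum_(x < N0) _.
set Q := fracSum _ _ _ _ _ _ _.
by rewrite [RHS]addrACA (addrC Z Q).
Qed.
End Main.
Unset Implicit Arguments.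
(* lambda = m*a, kappa = p*b, mu = n*c; a,b,c are the block dimensions. *)
Theorem mainTheorem2 (F : finFieldType) (S X ell Kc p m n a b c : nat)
  (hS : (0 < S)%N) (hX : (0 < X)%N) (hell : (0 < ell)%N) (hKc : (0 < Kc)%N)
  (hp : (0 < p)%N) (hm : (0 < m)%N) (hn : (0 < n)%N)
  (ha : (0 < a)%N) (hb : (0 < b)%N) (hc : (0 < c)%N)
  (hL : (ell * Kc <= #|{: F}| - S)%N)
  (f : 'I_ell -> 'I_Kc -> F) (alpha : 'I_S -> F)
  (hf : forall l k l' k', f l k = f l' k' -> l = l' /\ k = k')
  (halpha : injective alpha)
  (hfa : forall l k s, f l k != alpha s) :
  (* part (a), together with the defining identity of the C's *)
  (forall (A : 'I_ell -> 'I_Kc -> 'M[F]_(m * a, p * b))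
          (B : 'I_ell -> 'I_Kc -> 'M[F]_(p * b, n * c)) (l : 'I_ell) (k : 'I_Kc),
     (forall s : 'I_S,
        @Ppoly F p m a b (A l k) (f l k - alpha s) *m @Qpoly F p m n b c (B l k) (f l k - alpha s)
        = \sum_(i < Rp p m n + p - 1) (f l k - alpha s) ^+ i *: @Cmat F p m n a b c (A l k) (B l k) i.+1)
     /\
     (forall (mi : 'I_m) (ni : 'I_n),
        @Cmat F p m n a b c (A l k) (B l k) (p + p * mi + p * m * ni)%N
          = \sum_(pi < p) blk (A l k) mi pi *m blk (B l k) pi ni
        /\ \sum_(pi < p) blk (A l k) mi pi *m blk (B l k) pi ni
          = blk (A l k *m B l k) mi ni))
  /\
  (* part (b) *)
  (exists I : (('I_ell -> 'I_Kc -> 'M[F]_(m * a, p * b)) ->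
               ('I_ell -> 'I_Kc -> 'M[F]_(p * b, n * c)) ->
               ('I_ell -> 'I_X -> 'M[F]_(a, b)) ->
               ('I_ell -> 'I_X -> 'M[F]_(b, c)) -> nat -> 'M[F]_(a, c)),
     (exists G : (('I_ell -> 'I_X -> 'M[F]_(a, b)) ->
                  ('I_ell -> 'I_X -> 'M[F]_(b, c)) -> nat -> 'M[F]_(a, c)),
        forall A B ZA ZB (x : nat), (N0 Kc X p m n < x)%N -> I A B ZA ZB x = G ZA ZB x)
     /\
     forall (A : 'I_ell -> 'I_Kc -> 'M[F]_(m * a, p * b))
            (B : 'I_ell -> 'I_Kc -> 'M[F]_(p * b, n * c))
            (ZA : 'I_ell -> 'I_X -> 'M[F]_(a, b)) (ZB : 'I_ell -> 'I_X -> 'M[F]_(b, c))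
            (Z' : nat -> 'M[F]_(a, c)) (Z'' : 'I_ell -> 'I_Kc -> nat -> 'M[F]_(a, c)),
       (forall (l : 'I_ell) (k : 'I_Kc) (i : nat), inEset p m n i -> Z'' l k i = 0) ->
       forall s : 'I_S,
         @Yans F ell Kc X p m n a b c S f alpha A B ZA ZB Z' Z'' s
         = @fracSum F ell Kc p m n a c S f alpha
             (fun l k i => @Cmat F p m n a b c (A l k) (B l k) i + Z'' l k i) s
           + \sum_(x < Rp p m n * Kc + 2 * X - 1)
               alpha s ^+ x *:
                 (if (x.+1 <= N0 Kc X p m n)%N then I A B ZA ZB x.+1 + Z' x.+1
                  else I A B ZA ZB x.+1)).

Proof.
split.
  move=> A B l k; split.
    by move=> s; exact: PQ_C.
  move=> mi ni; split; first exact: Cmat_E.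
  by symmetry; exact: blk_mul.
exact: part_b.
Qed.
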